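(* Let $FTS=\langle S_0,S,Act,\to,L,\mathcal{F}\rangle$ be a fair transition system with $\mathcal{F}=\{F_1,\dots,F_m\}$, and let $\sigma$ be an execution of $FTS$. If there are states $s,s'$ and an index $i$ such that $s\in Inf_s(\sigma)$, $s'\in Inf_s(\sigma)$ and $s\xrightarrow{a}s'\in F_i$, then there exist $s_1,s_1'$ with $s_1\xrightarrow{a}s_1'\in F_i$ and $s_1\xrightarrow{a}s_1'\in Inf_t(\sigma)$. In particular, an execution that visits infinitely often both endpoints of a fair transition of $F_i$ takes some transition of $F_i$ infinitely often.
   Context: A transition system $\langle S_0,S,Act,\to,L\rangle$ has a finite set of states $S$, initial states $S_0\subseteq S$, a set of action labels $Act$, a total labelled transition relation $\to\subseteq S\times Act\times S$ (written $s\xrightarrow{a}s'$), and a labelling $L$ of states by atomic propositions. An execution is an infinite sequence $s_0\xrightarrow{a_0}s_1\xrightarrow{a_1}s_2\cdots$ with $s_0\in S_0$ and each $s_k\xrightarrow{a_k}s_{k+1}\in\to$; a fragment is a finite or infinite contiguous piece of an execution; $s\xrightarrow{+}s'$ denotes a fragment of one or more transitions from $s$ to $s'$. $Inf_s(\sigma)$ is the set of states occurring infinitely often in $\sigma$ and $Inf_t(\sigma)$ the set of transitions occurring infinitely often in $\sigma$. A fair transition system is a transition system together with a set $\mathcal{F}=\{F_1,\dots,F_m\}$ of fairness constraints, $F_i\subseteq\to$, such that: (a) all transitions in one $F_i$ carry the same label; (b) whenever $s\xrightarrow{a}s'\in F_i$, every fragment $s\xrightarrow{+}s'$ (one or more transitions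 from $s$ to $s'$) has the form $s\xrightarrow{*}s_1\xrightarrow{a}s_1'\xrightarrow{*}s'$ with $s_1\xrightarrow{a}s_1'\in F_i$; (c) if $s\xrightarrow{a}s'\in F_i$ and $s\xrightarrow{a}s''\in\to$ then $s'=s''$. *)

(* Defs.v *)
From mathcomp Require Export all_boot.
Set Implicit Arguments. Unset Strict Implicit. Unset Printing Implicit Defensive.

Section FTS.
Variables (S : finType) (Act : Type).

Definition trans_rel := S -> Act -> S -> Prop.

Definition total_trans (tr : trans_rel) : Prop :=
  forall s, exists a s', tr s a s'.

Definition is_execution (S0 : S -> Prop) (tr : trans_rel)
    (x : nat -> S) (l : nat -> Act) : Prop :=
  S0 (x 0) /\ forall k, tr (x k) (l k) (x k.+1).

Definition inf_state (x : nat -> S) (s : S) : Prop :=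
  forall N, exists k, N <= k /\ x k = s.

Definition inf_trans (x : nat -> S) (l : nat -> Act) (s : S) (a : Act) (s' : S)
  : Prop :=
  forall N, exists k, [/\ N <= k, x k = s, l k = a & x k.+1 = s'].

(* A fairness constraint F (a set of transitions) satisfying (a), (b), (c).
   A fragment s -+-> s' is a finite contiguous piece x i ... x j (i < j)
   of an execution. *)
Definition fairness_constraint (S0 : S -> Prop) (tr : trans_rel)
    (F : trans_rel) : Prop :=
  [/\
      (forall s a s', F s a s' -> tr s a s'),
      (forall s a s' t b t', F s a s' -> F t b t' -> a = b),
      (forall s a s', F s a s' ->
         forall x l, is_execution S0 tr x l ->
         forall i j, i < j -> x i = s -> x j = s' ->
         exists k, [/\ i <= k < j, l k = a & F (x k) a (x k.+1)])
    &
      (forall s a s' s'', F s a s' -> tr s a s'' -> s' = s'')].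

Definition is_fts (AP : Type) (S0 : S -> Prop) (tr : trans_rel)
    (L : S -> AP -> Prop) (m : nat) (F : 'I_m -> trans_rel) : Prop :=
  total_trans tr /\ forall i, fairness_constraint S0 tr (F i).

End FTS.

(* Main.v *)
Require Import Defs.
From mathcomp Require Import all_boot.
From Stdlib Require Import Classical_Prop.

Lemma uniform_bound (T : eqType) (P : T -> nat -> Prop) (ps : seq T) :
  (forall p, p \in ps -> exists N, forall k, N <= k -> P p k) ->
  exists N, forall p, p \in ps -> forall k, N <= k -> P p k.
Proof.
elim: ps => [|q ps IH] H; first by exists 0.
have [N1 H1] := H q (mem_head _ _).
have [N2 H2] := IH (fun p Hp => H p (mem_behead (s:=q :: ps) Hp)).
exists (maxn N1 N2) => p; rewrite in_cons => /orP [/eqP->|Hp] k Hk.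
- by apply: H1; apply: leq_trans Hk; apply: leq_maxl.
- by apply: H2 => //; apply: leq_trans Hk; apply: leq_maxr.
Qed.

Theorem mainTheorem1 (S : finType) (Act AP : Type) (S0 : S -> Prop)
  (tr : trans_rel S Act) (L : S -> AP -> Prop) (m : nat)
  (F : 'I_m -> trans_rel S Act)
  (Hfts : is_fts S0 tr L F)
  (x : nat -> S) (l : nat -> Act) (Hexec : is_execution S0 tr x l)
  (s s' : S) (a : Act) (i : 'I_m) :
  inf_state x s -> inf_state x s' -> F i s a s' ->
  exists s1 s1', F i s1 a s1' /\ inf_trans x l s1 a s1'.
Proof.
move=> Hs Hs' HF.
have [_ /(_ i) [_ _ Hb _]] := Hfts.
have HG : forall N, exists k, [/\ N <= k, l k = a & F i (x k) a (x k.+1)].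
  move=> N; have [k1 [Hk1 Ek1]] := Hs N.
  have [k2 [Hk2 Ek2]] := Hs' k1.+1.
  have [k [/andP [Hk Hk'] El Fk]] := Hb _ _ _ HF x l Hexec k1 k2 Hk2 Ek1 Ek2.
  by exists k; split => //; apply: leq_trans Hk.
apply: NNPP => Hno.
pose P (p : S * S) k := ~ [/\ l k = a, F i (x k) a (x k.+1), x k = p.1 & x k.+1 = p.2].
have Hp : forall p, p \in enum {: S * S} -> exists N, forall k, N <= k -> P p k.
  move=> [p1 p2] _.
  case: (classic (F i p1 a p2)) => Fp.
  - case: (classic (inf_trans x l p1 a p2)) => Hit.
      by exfalso; apply: Hno; exists p1, p2.
    apply: NNPP => Hn; apply: Hit => N.
    apply: NNPP => Hk; apply: Hn; exists N => k Hk' [E1 E2 E3 E4].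
    by apply: Hk; exists k; split.
  - by exists 0 => k _ [_ Fk E1 E2]; apply: Fp; rewrite /= in E1 E2; rewrite -E1 -E2.
have [N HN] := @uniform_bound _ P _ Hp.
have [k [Hk El Fk]] := HG N.
apply: (HN (x k, x k.+1) _ k Hk); last by split.
by rewrite mem_enum.
Qed.
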